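(* Let $\mathbb{F}$ be a field and let $P_i(\lambda)\in \mathbb{F}[\lambda]^{m_i\times n}$, $i=1,\ldots,k$ ($k\ge 1$), be polynomial matrices such that $m:=\sum_{i=1}^k m_i\ge n$. Let $P(\lambda)\in\mathbb{F}[\lambda]^{m\times n}$ be the compound matrix obtained by stacking $P_1(\lambda),\ldots,P_k(\lambda)$ vertically, and assume $r:=\operatorname{rank}P(\lambda)\ge 1$ (normal rank). Then for $G(\lambda)\in\mathbb{F}[\lambda]^{r\times n}$ the following are equivalent: (1) $G(\lambda)$ is a compact GCRD of $\{P_i(\lambda)\}_{i=1}^k$; (2) there exists a left invertible polynomial matrix $N(\lambda)\in\mathbb{F}[\lambda]^{m\times r}$ such that $P(\lambda)=N(\lambda)G(\lambda)$; (3) there exists a unimodular matrix $U(\lambda)\in\mathbb{F}[\lambda]^{m\times m}$ such that $P(\lambda)=U(\lambda)\begin{bmatrix} G(\lambda)\\ 0\end{bmatrix}$. Moreover, any compact GCRD $G(\lambda)$ of $\{P_i(\lambda)\}_{i=1}^k$ can be written as $G(\lambda)=\sum_{i=1}^k L_i(\lambda)P_i(\lambda)$ for some polynomial matrices $L_i(\lambda)\in\mathbb{F}[\lambda]^{r\times m_i}$; equivalently, $G(\lambda)=L(\lambda)P(\lambda)$ for some $L(\lambda)\in\mathbb{F}[\lambda]^{r\times m}$.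
   Context: A matrix $D(\lambda)\in\mathbb{F}[\lambda]^{p\times n}$ is a common right divisor (CRD) of $\{P_i(\lambda)\}_{i=1}^k$ if there are polynomial matrices $Q_i(\lambda)\in\mathbb{F}[\lambda]^{m_i\times p}$ with $P_i(\lambda)=Q_i(\lambda)D(\lambda)$ for all $i$. A matrix $G(\lambda)\in\mathbb{F}[\lambda]^{\ell\times n}$ is a greatest common right divisor (GCRD) if it is a CRD and for every CRD $D(\lambda)\in\mathbb{F}[\lambda]^{p\times n}$ there is a polynomial $Q(\lambda)\in\mathbb{F}[\lambda]^{\ell\times p}$ with $G(\lambda)=Q(\lambda)D(\lambda)$. A GCRD (resp. CRD) with exactly $r$ rows, where $r$ is the normal rank of the compound matrix, is called compact. The normal rank is the rank over the field of fractions $\mathbb{F}(\lambda)$. A square polynomial matrix is unimodular if its determinant is a nonzero constant; $N(\lambda)$ is left invertible if there is a polynomial matrix $L(\lambda)$ with $L(\lambda)N(\lambda)=I$. *)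

(* Defs.v *)
From HB Require Import structures.
From mathcomp Require Import all_boot all_order all_algebra.
Set Implicit Arguments. Unset Strict Implicit. Unset Printing Implicit Defensive.
Import GRing.Theory.
Local Open Scope ring_scope.

Definition nrank (F : fieldType) (a b : nat) (A : 'M[{poly F}]_(a, b)) : nat :=
  \rank (map_mx (@FracField.tofrac _) A : 'M[{fraction {poly F}}]_(a, b)).

Definition is_CRD (F : fieldType) (k n : nat) (ms : 'I_k -> nat)
    (P : forall i : 'I_k, 'M[{poly F}]_(ms i, n)) (p : nat)
    (D : 'M[{poly F}]_(p, n)) : Prop :=
  exists Q : forall i : 'I_k, 'M[{poly F}]_(ms i, p),
    forall i : 'I_k, P i = Q i *m D.

Definition is_GCRD (F : fieldType) (k n : nat) (ms : 'I_k -> nat)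
    (P : forall i : 'I_k, 'M[{poly F}]_(ms i, n)) (l : nat)
    (G : 'M[{poly F}]_(l, n)) : Prop :=
  is_CRD P G /\
  forall (p : nat) (D : 'M[{poly F}]_(p, n)),
    is_CRD P D -> exists Q : 'M[{poly F}]_(l, p), G = Q *m D.

Definition is_compact_GCRD (F : fieldType) (k n : nat) (ms : 'I_k -> nat)
    (P : forall i : 'I_k, 'M[{poly F}]_(ms i, n)) (l : nat)
    (G : 'M[{poly F}]_(l, n)) : Prop :=
  l = nrank (mxcol P) /\ is_GCRD P G.

Definition unimodular (F : fieldType) (a : nat) (U : 'M[{poly F}]_a) : Prop :=
  exists c : F, c != 0 /\ \det U = c%:P.

Definition left_invertible (F : fieldType) (a b : nat)
    (N : 'M[{poly F}]_(a, b)) : Prop :=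
  exists L : 'M[{poly F}]_(b, a), L *m N = 1%:M.

(* The m x n matrix [G; 0] obtained by padding G (r x n) with zero rows
   (used with r <= m). *)
Definition pad_zero_rows (R : pzRingType) (m r n : nat) (G : 'M[R]_(r, n))
    : 'M[R]_(m, n) :=
  \matrix_(i < m, j < n)
    match (insub (nat_of_ord i) : option 'I_r) with
    | Some i' => G i' j
    | None => 0
    end.

(* Main.v *)
Require Import Defs.
From HB Require Import structures.
From mathcomp Require Import all_boot all_order all_algebra.
From mathcomp Require Import perm.
Set Implicit Arguments. Unset Strict Implicit. Unset Printing Implicit Defensive.
Import GRing.Theory.
Local Open Scope ring_scope.

Section Aux.
Variable F : fieldType.
Local Notation R := {poly F}.

Lemma colred m (c : 'cV[R]_(1 + m)) :
  exists V : 'M[R]_(1 + m), exists g : 'M[R]_1,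
    V \in unitmx /\ V *m c = col_mx g 0.
Proof.
suff H : forall (b : nat) (c : 'cV[R]_(1 + m)),
    (exists i, (c i ord0 != 0%R) && (size (c i ord0) < b)%N) ->
    exists V : 'M[R]_(1 + m), exists g : 'M[R]_1,
    V \in unitmx /\ V *m c = col_mx g 0.
  case: (pickP (fun i => c i 0 != 0)) => [i ci|c0].
    by apply: (H (size (c i 0)).+1); exists i; rewrite ci ltnSn.
  exists 1%:M, 0; rewrite unitmx1 mul1mx col_mx0; split => //.
  by apply/matrixP => i j; rewrite ord1 mxE; move/negbFE/eqP: (c0 i).
elim => [|b IH] {}c [i /andP[ci si]] //.
case: (@arg_minnP _ i (fun j => c j 0 != 0) (fun j => size (c j 0)) ci)
  => j0 cj0 minj0.
pose c1 := xrow j0 0 c.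
have c10 : c1 0 0 = c j0 0 by rewrite /c1 /xrow /row_perm mxE tpermR.
pose a := c1 0 0.
pose d := dsubmx c1.
pose Q := map_mx (fun p => p %/ a) d.
pose V2 : 'M[R]_(1 + m) := block_mx 1%:M 0 (- Q) 1%:M.
have uV2 : V2 \in unitmx by rewrite unitmxE det_lblock !det1 mul1r unitr1.
pose c2 := V2 *m c1.
have c2E : c2 = col_mx (usubmx c1) (map_mx (fun p => p %% a) d).
  rewrite /c2 -{1}(vsubmxK c1) mul_block_col !mul1mx mul0mx addr0; congr col_mx.
  apply/matrixP => k l; rewrite ord1 !mxE big_ord1 !mxE.
  have -> : c (tperm j0 0 (lshift m ord0)) 0 = a.
    by rewrite /a /c1 /xrow /row_perm mxE; congr (c (tperm _ _ _) _); apply: val_inj.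
  by apply/eqP; rewrite mulNr addrC subr_eq addrC -divp_eq.
have uX : (V2 *m tperm_mx j0 0) \in unitmx by rewrite unitmx_mul uV2 unitmx_perm.
have [d0|nd0] := eqVneq (map_mx (fun p => p %% a) d) 0.
  exists (V2 *m tperm_mx j0 0), (usubmx c1); split => //.
  by rewrite -mulmxA -xrowE -d0 -c2E.
have [k dk] : exists k, (map_mx (fun p => p %% a) d) k 0 != 0.
  apply/existsP; apply: contraNT nd0; rewrite negb_exists => /forallP h.
  by apply/eqP/matrixP => k l; rewrite ord1; move: (h k); rewrite negbK => /eqP ->; rewrite mxE.
have [|V [g [uV eV]]] := IH c2.
  exists (rshift 1 k); rewrite c2E col_mxEd dk /=.
  rewrite mxE; apply: (leq_trans (ltn_modpN0 _ _)); first by rewrite /a c10.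
  by rewrite /a c10 -ltnS (leq_trans _ si) // ltnS minj0.
exists (V *m (V2 *m tperm_mx j0 0)), g; split; first by rewrite unitmx_mul uV uX.
by rewrite -!mulmxA -xrowE -/c1 -eV.
Qed.

Local Notation K := {fraction R}.
Definition phi m n (A : 'M[R]_(m, n)) : 'M[K]_(m, n) :=
  map_mx (@FracField.tofrac _) A.
Definition Emx m s : 'M[R]_(m, s) := \matrix_(i, j) ((i : nat) == j)%:R.
Definition rfree s n (H : 'M[R]_(s, n)) := row_free (phi H).

Lemma Eblock m s : Emx (1 + m) (1 + s) = block_mx 1%:M 0 0 (Emx m s).
Proof.
apply/matrixP => i j; rewrite -(splitK i) -(splitK j).
case: (split i) => i'; case: (split j) => j';
  rewrite /= ?block_mxEul ?block_mxEur ?block_mxEdl ?block_mxEdr !mxE /=.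
- by [].
- by rewrite ord1.
- by rewrite ord1.
- by rewrite eqn_add2l.
Qed.

Lemma rfree0 n (H : 'M[R]_(0, n)) : rfree H.
Proof. by rewrite /rfree /row_free; have := rank_leq_row (phi H); rewrite leqn0. Qed.

Lemma echelon n : forall m (A : 'M[R]_(m, n)),
  exists s, exists H : 'M[R]_(s, n), exists V : 'M[R]_m,
    [/\ V \in unitmx, (s <= m)%N, V *m A = Emx m s *m H & rfree H].
Proof.
elim: n => [|n IH] m A.
  exists 0%N, 0, 1%:M; split; rewrite ?unitmx1 ?rfree0 //.
  by apply/matrixP => i [].
case: m A => [|m] A.
  exists 0%N, 0, 1%:M; split; rewrite ?unitmx1 ?rfree0 //.
  by apply/matrixP => [] [].
rewrite -[n.+1]/(1 + n)%N -[m.+1]/(1 + m)%N.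
pose A' : 'M[R]_(1 + m, 1 + n) := A.
pose c := lsubmx A'.
have [V1 [g [uV1 eV1]]] := colred c.
pose B := V1 *m rsubmx A'.
have A1 : V1 *m A' = row_mx (col_mx g 0) B.
  by rewrite -{1}(hsubmxK A') mul_mx_row eV1.
have [g0|gn0] := eqVneq g 0.
  have [s [H [V2 [uV2 sm eV2 fH]]]] := IH _ B.
  exists s, (row_mx 0 H : 'M_(s, 1 + n)), (V2 *m V1); split => //.
  - by rewrite unitmx_mul uV2 uV1.
  - rewrite -mulmxA -/A' A1.
    rewrite mul_mx_row eV2 g0 col_mx0 mulmx0.
    by rewrite mul_mx_row mulmx0.
  - rewrite /rfree /phi map_row_mx map_mx0; apply: inj_row_free => v.
    rewrite mul_mx_row mulmx0 -row_mx0 => /eq_row_mx [_ h].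
    by apply: (row_free_inj fH); rewrite mul0mx.
pose b := usubmx B; pose A'' := dsubmx B.
have [s [H2 [V2 [uV2 sm eV2 fH]]]] := IH _ A''.
exists (1 + s)%N, (block_mx g b 0 H2 : 'M_(1 + s, 1 + n)),
  (block_mx 1%:M 0 0 V2 *m V1); split => //.
- by rewrite unitmx_mul uV1 andbT unitmxE det_lblock det1 mul1r -unitmxE.
- rewrite -mulmxA -/A' A1 -(vsubmxK B) -/b -/A'' -block_mxEh.
  rewrite (Eblock m s) !mulmx_block !mul1mx !mul0mx !mulmx0 !addr0 !add0r.
  by rewrite eV2.
- rewrite /rfree /phi map_block_mx map_mx0; apply: inj_row_free => v.
  rewrite -(hsubmxK v) mul_row_block mulmx0 addr0 -row_mx0.
  move=> /eq_row_mx [h1 h2].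
  have v10 : lsubmx v = 0.
    move: h1; rewrite [map_mx _ g]mx11_scalar mul_mx_scalar => /eqP.
    rewrite scalemx_eq0 => /orP [|/eqP //].
    rewrite mxE tofrac_eq0 => g00; case/eqP: gn0.
    by apply/matrixP => i j; rewrite !ord1 mxE (eqP g00).
  move: h2; rewrite v10 mul0mx add0r => h2.
  have : rsubmx v = 0 by apply: (row_free_inj fH); rewrite mul0mx.
  by move=> ->; rewrite row_mx0.
Qed.

Lemma phi_inj m n (A B : 'M[R]_(m, n)) : phi A = phi B -> A = B.
Proof.
move=> h; apply/matrixP => i j; move/matrixP/(_ i j): h.
by rewrite !mxE => /eqP; rewrite tofrac_eq => /eqP.
Qed.

Lemma phiM m n p (A : 'M[R]_(m, n)) (B : 'M[R]_(n, p)) : phi (A *m B) = phi A *m phi B.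
Proof. exact: map_mxM. Qed.

Lemma phi1 m : phi (1%:M : 'M[R]_m) = 1%:M.
Proof. exact: map_mx1. Qed.

Lemma phi_unit m (V : 'M[R]_m) : V \in unitmx -> phi V \in unitmx.
Proof.
rewrite !unitmxE /phi det_map_mx unitfE tofrac_eq0 => uV.
by apply: contraTneq uV => ->; rewrite unitr0.
Qed.

Lemma ETE m s : (s <= m)%N -> (Emx m s)^T *m Emx m s = 1%:M.
Proof.
move=> sm; apply/matrixP => k l; rewrite !mxE.
rewrite (bigD1 (widen_ord sm k)) //= big1 ?addr0.
  by rewrite !mxE /= eqxx mul1r.
move=> i ik; rewrite !mxE.
have -> : ((i : nat) == k) = false.
  by apply/negbTE; apply: contra ik => /eqP h; apply/eqP/val_inj.
by rewrite mul0r.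
Qed.

Lemma padE m r n (G : 'M[R]_(r, n)) : pad_zero_rows m G = Emx m r *m G.
Proof.
apply/matrixP => i j; rewrite !mxE.
case: insubP => [i' _ iE | nlt].
  rewrite (bigD1 i') //= big1 ?addr0.
    by rewrite !mxE iE eqxx mul1r.
  move=> k ki; rewrite !mxE -iE.
  have -> : ((i' : nat) == k) = false.
    by apply/negbTE; apply: contra ki => /eqP h; apply/eqP/val_inj.
  by rewrite mul0r.
rewrite big1 // => k _; rewrite !mxE.
have -> : ((i : nat) == k) = false.
  by apply/negbTE; apply: contra nlt => /eqP ->.
by rewrite mul0r.
Qed.

Lemma unimodP m (U : 'M[R]_m) : unimodular U <-> U \in unitmx.
Proof.
split.
  move=> [c [c0 dU]]; rewrite unitmxE dU poly_unitE size_polyC c0 /=.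
  by rewrite coefC /= unitfE.
rewrite unitmxE poly_unitE => /andP [/eqP s1 u0].
exists (\det U)`_0; split; first by rewrite -unitfE.
by apply: size1_polyC; rewrite s1.
Qed.

Lemma rank_ech m n s (A : 'M[R]_(m, n)) (V : 'M[R]_m) (H : 'M[R]_(s, n)) :
  V \in unitmx -> (s <= m)%N -> V *m A = Emx m s *m H -> rfree H ->
  s = nrank A.
Proof.
move=> uV sm eV fH.
have fV : row_full (phi V) by rewrite row_full_unit phi_unit.
rewrite /nrank -[map_mx _ A]/(phi A).
have -> : \rank (phi A) = \rank (phi (V *m A)) by rewrite phiM (eqmxMfull _ fV).
rewrite eV phiM mxrankMfree //.
apply/eqP; rewrite eqn_leq rank_leq_col /=.
have := mxrankM_maxr (phi (Emx m s)^T) (phi (Emx m s)).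
rewrite andbT; move=> h; apply: leq_trans h; by rewrite -phiM ETE // phi1 mxrank1.
Qed.
End Aux.

Theorem theorem2p9 (F : fieldType) (k n : nat) (ms : 'I_k -> nat)
    (P : forall i : 'I_k, 'M[{poly F}]_(ms i, n)) :
  (0 < k)%N ->
  (n <= \sum_(i < k) ms i)%N ->
  (1 <= nrank (mxcol P))%N ->
  (forall G : 'M[{poly F}]_(nrank (mxcol P), n),
     [<-> is_compact_GCRD P G;
          exists N : 'M[{poly F}]_(\sum_(i < k) ms i, nrank (mxcol P)),
            left_invertible N /\ mxcol P = N *m G;
          exists U : 'M[{poly F}]_(\sum_(i < k) ms i),
            unimodular U /\ mxcol P = U *m pad_zero_rows (\sum_(i < k) ms i) G])
  /\
  (forall G : 'M[{poly F}]_(nrank (mxcol P), n),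
     is_compact_GCRD P G ->
     (exists L : forall i : 'I_k, 'M[{poly F}]_(nrank (mxcol P), ms i),
        G = \sum_(i < k) L i *m P i)
     /\
     (exists L : 'M[{poly F}]_(nrank (mxcol P), \sum_(i < k) ms i),
        G = L *m mxcol P)).
Proof.
move=> k0 mn r1.
set m := (\sum_(i < k) ms i)%N.
set r := nrank (mxcol P).
set PP := mxcol P.
have rm : (r <= m)%N by rewrite /r /nrank rank_leq_row.
have ETEr := @ETE F _ _ rm.
have tf : forall G : 'M[{poly F}]_(r, n),
  [<-> is_compact_GCRD P G;
       exists N : 'M[{poly F}]_(m, r), left_invertible N /\ PP = N *m G;
       exists U : 'M[{poly F}]_m, unimodular U /\ PP = U *m pad_zero_rows m G].
  move=> G; tfae.
  - case=> _ [crdG gcrd].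
    have [s [H [V [uV sm eV fH]]]] := echelon PP.
    have srk := rank_ech uV sm eV fH.
    subst s.
    have ePP : PP = invmx V *m (Emx F m r *m H) by rewrite -eV mulKmx.
    have crdH : is_CRD P H.
      exists (fun i => submxcol (invmx V *m Emx F m r) i) => i.
      by rewrite submxcol_mul -mulmxA -ePP /PP mxcolK.
    have [Q eG] := gcrd _ H crdH.
    case: crdG => Q' eQ'.
    have ePP' : PP = mxcol Q' *m G by rewrite /PP mxcol_mul; apply: eq_mxcol.
    pose X := (Emx F m r)^T *m V *m mxcol Q'.
    have eH : H = X *m Q *m H.
      by rewrite -mulmxA -eG /X -!mulmxA -ePP' eV mulmxA ETEr mul1mx.
    have XQ : X *m Q = 1%:M.
      apply: phi_inj; rewrite phi1; apply: (row_free_inj fH) => /=.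
      by rewrite -!phiM -eH mul1mx.
    have QX := mulmx1C XQ.
    exists (invmx V *m Emx F m r *m X); split.
      exists (Q *m (Emx F m r)^T *m V).
      have -> : Q *m (Emx F m r)^T *m V *m (invmx V *m Emx F m r *m X)
          = Q *m ((Emx F m r)^T *m (V *m invmx V) *m Emx F m r) *m X.
        by rewrite !mulmxA.
      by rewrite mulmxV // mulmx1 ETEr mulmx1 QX.
    rewrite eG.
    have -> : invmx V *m Emx F m r *m X *m (Q *m H)
        = invmx V *m Emx F m r *m (X *m Q) *m H by rewrite !mulmxA.
    by rewrite XQ mulmx1 -mulmxA.
  - case=> N [[L LN] eN].
    have [s [H [V [uV sm eV fH]]]] := echelon N.
    have srk := rank_ech uV sm eV fH.
    have nN : nrank N = r.
      apply/eqP; rewrite eqn_leq /nrank rank_leq_col /=.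
      have := mxrankM_maxr (phi L) (phi N).
      by rewrite -phiM LN phi1 mxrank1.
    rewrite nN in srk; subst s.
    have eN' : N = invmx V *m (Emx F m r *m H) by rewrite -eV mulKmx.
    have [_ uH] : (L *m invmx V *m Emx F m r) \in unitmx /\ H \in unitmx.
      by apply: mulmx1_unit; rewrite -LN eN' !mulmxA.
    have h1 : forall Y : 'M[{poly F}]_r,
        (Emx F m r *m Y *m (Emx F m r)^T + (1%:M - Emx F m r *m (Emx F m r)^T)) *m Emx F m r
        = Emx F m r *m Y.
      move=> Y; rewrite mulmxDl mulmxBl mul1mx -!mulmxA ETEr !mulmx1.
      by rewrite subrr addr0.
    have h2 : forall Y : 'M[{poly F}]_r,
        (Emx F m r *m Y *m (Emx F m r)^T + (1%:M - Emx F m r *m (Emx F m r)^T))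
          *m (1%:M - Emx F m r *m (Emx F m r)^T)
        = 1%:M - Emx F m r *m (Emx F m r)^T.
      move=> Y; rewrite mulmxBr mulmx1 mulmxA h1.
      by rewrite addrC addKr.
    pose T := Emx F m r *m H *m (Emx F m r)^T + (1%:M - Emx F m r *m (Emx F m r)^T).
    pose T' := Emx F m r *m invmx H *m (Emx F m r)^T + (1%:M - Emx F m r *m (Emx F m r)^T).
    have TT' : T *m T' = 1%:M.
      rewrite /T /T' mulmxDr h2 !mulmxA h1 -(mulmxA (Emx F m r) H) mulmxV //.
      by rewrite mulmx1 addrC subrK.
    have uT : T \in unitmx by case: (mulmx1_unit TT').
    exists (invmx V *m T); split.
      by apply/unimodP; rewrite unitmx_mul unitmx_inv uV uT.
    rewrite eN eN' padE -!mulmxA; congr (invmx V *m _).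
    by rewrite !mulmxA h1.
  - case=> U [/unimodP uU eU].
    rewrite padE in eU.
    split; first by [].
    split.
      exists (fun i => submxcol (U *m Emx F m r) i) => i.
      by rewrite submxcol_mul -mulmxA -eU /PP mxcolK.
    move=> p D [Q eQ].
    have ePP : PP = mxcol Q *m D by rewrite /PP mxcol_mul; apply: eq_mxcol.
    exists ((Emx F m r)^T *m invmx U *m mxcol Q).
    by rewrite -mulmxA -ePP eU -mulmxA mulKmx // mulmxA ETEr mul1mx.
split; first exact: tf.
move=> G cG.
case: (tf G 0%N 2%N) => h _; case: (h cG) => U [/unimodP uU eU].
rewrite padE in eU.
have eG : G = (Emx F m r)^T *m invmx U *m PP.
  by rewrite eU -mulmxA mulKmx // mulmxA ETEr mul1mx.
split.
  exists (fun i => submxrow ((Emx F m r)^T *m invmx U) i).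
  by rewrite {1}eG -mul_mxrow_mxcol submxrowK.
by exists ((Emx F m r)^T *m invmx U).
Qed.
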